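(* (a) There is a unique $p_0\in(0,1/2)$ with $\log\left(\frac{1-p_0}{p_0}\right)=\frac{1-p_0}{1-2p_0}$. Moreover, if $0<p\le p_0$ then $\log\left(\frac{1-p}{p}\right)\ge\frac{1-p}{1-2p}$. (b) Given $p\in(0,1)$, there is a unique $s_0\in(0,1)$ with $(1-p)(2-s_0)=\exp(1/s_0)(1-s_0)$. Moreover, if $p>1/2$ then $s_0>2-p^{-1}$, and if $p_0<p\le1/2$ then $s_0>\frac{1-2p}{1-p}$, where $p_0$ is as in (a). *)

(* Defs.v *)
From Stdlib Require Export Reals.
Open Scope R_scope.

Definition eq_p0 (p : R) : Prop := ln ((1 - p) / p) = (1 - p) / (1 - 2 * p).

Definition eq_s0 (p s : R) : Prop := (1 - p) * (2 - s) = exp (1 / s) * (1 - s).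

(* Main.v *)
Require Import Defs.
From Stdlib Require Import Reals Lra.
Open Scope R_scope.

Definition F (p : R) := ln ((1 - p) / p) - (1 - p) / (1 - 2 * p).
Definition g (p s : R) := (1 - p) * (2 - s) - exp (1 / s) * (1 - s).
Definition Q (p s : R) := (1 - p) * (1 + / (1 - s)) * exp (- / s).

Lemma cln x : 0 < x -> continuity_pt ln x.
Proof. intros H. apply derivable_continuous_pt. exists (/x). apply derivable_pt_lim_ln; auto. Qed.

Lemma exp32 : exp (3/2) < 9.
Proof.
  replace (3/2) with (1 + 1/2) by field. rewrite exp_plus.
  pose proof exp_le_3. assert (exp (1/2) < exp 1) by (apply exp_increasing; lra).
  pose proof (exp_pos (1/2)). nra.
Qed.

Lemma F_dec p q : 0 < p -> p < q -> q < 1/2 -> F q < F p.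
Proof.
  intros Hp Hpq Hq. unfold F.
  replace ((1 - q) / q) with (/ q - 1) by (field; lra).
  replace ((1 - p) / p) with (/ p - 1) by (field; lra).
  replace ((1 - q) / (1 - 2 * q)) with (/2 + /2 * / (1 - 2 * q)) by (field; lra).
  replace ((1 - p) / (1 - 2 * p)) with (/2 + /2 * / (1 - 2 * p)) by (field; lra).
  assert (/ q < / p) by (apply Rinv_lt_contravar; nra).
  assert (/ (1 - 2 * p) < / (1 - 2 * q)) by (apply Rinv_lt_contravar; nra).
  assert (0 < / q - 1).
  { assert (2 < / q). { replace 2 with (/ (1/2)) by field. apply Rinv_lt_contravar; nra. } lra. }
  assert (ln (/ q - 1) < ln (/ p - 1)) by (apply ln_increasing; lra).
  lra.
Qed.

Lemma F_01 : 0 < F (1/10).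
Proof.
  unfold F.
  replace ((1 - 1/10) / (1/10)) with 9 by field.
  replace ((1 - 1/10) / (1 - 2 * (1/10))) with (9/8) by field.
  assert (ln (exp (3/2)) < ln 9) by (apply ln_increasing; [apply exp_pos| apply exp32]).
  rewrite ln_exp in H. lra.
Qed.

Lemma F_04 : F (2/5) < 0.
Proof.
  unfold F.
  replace ((1 - 2/5) / (2/5)) with (3/2) by field.
  replace ((1 - 2/5) / (1 - 2 * (2/5))) with 3 by field.
  assert (1 + 3 < exp 3) by (apply exp_ineq1; lra).
  assert (ln (3/2) < ln (exp 3)) by (apply ln_increasing; lra).
  rewrite ln_exp in H0. lra.
Qed.

Lemma Q_eq p s : 0 < s < 1 -> Q p s = (1 - p) * (2 - s) / (exp (1 / s) * (1 - s)).
Proof.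
  intros Hs. unfold Q. rewrite exp_Ropp. unfold Rdiv. rewrite Rmult_1_l.
  pose proof (exp_pos (/ s)). field. split; lra.
Qed.

Lemma gQ p s : 0 < s < 1 -> g p s = exp (1 / s) * (1 - s) * (Q p s - 1).
Proof.
  intros Hs. rewrite Q_eq by auto. unfold g. pose proof (exp_pos (1 / s)).
  field. split; lra.
Qed.

Lemma Q_inc p s t : 0 < p < 1 -> 0 < s -> s < t -> t < 1 -> Q p s < Q p t.
Proof.
  intros Hp Hs Hst Ht. unfold Q. rewrite !Rmult_assoc.
  apply Rmult_lt_compat_l; [lra|].
  assert (/ (1 - s) < / (1 - t)) by (apply Rinv_lt_contravar; nra).
  assert (/ t < / s) by (apply Rinv_lt_contravar; nra).
  assert (exp (- / s) < exp (- / t)) by (apply exp_increasing; lra).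
  assert (0 < / (1 - s)) by (apply Rinv_0_lt_compat; lra).
  pose proof (exp_pos (- / s)).
  apply Rmult_le_0_lt_compat; lra.
Qed.

Lemma g_sign p s : 0 < s < 1 -> (g p s < 0 <-> Q p s < 1).
Proof.
  intros Hs. rewrite gQ by auto. pose proof (exp_pos (1 / s)).
  assert (0 < exp (1 / s) * (1 - s)) by nra.
  split; intros; nra.
Qed.

Lemma g_zero p s : 0 < s < 1 -> (g p s = 0 <-> Q p s = 1).
Proof.
  intros Hs. rewrite gQ by auto. pose proof (exp_pos (1 / s)).
  assert (0 < exp (1 / s) * (1 - s)) by nra.
  split; intros H1.
  - destruct (Rmult_integral _ _ H1); lra.
  - rewrite H1. ring.
Qed.

Lemma eqs_g p s : eq_s0 p s <-> g p s = 0.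
Proof. unfold eq_s0, g. split; intros; lra. Qed.

Theorem lemma16 :
  exists p0 : R,
    (* (a) existence and uniqueness of p0 in (0, 1/2) *)
    ((0 < p0 < 1 / 2 /\ eq_p0 p0) /\
     (forall q : R, 0 < q < 1 / 2 -> eq_p0 q -> q = p0)) /\
    (* (a) the inequality for 0 < p <= p0 *)
    (forall p : R, 0 < p <= p0 -> ln ((1 - p) / p) >= (1 - p) / (1 - 2 * p)) /\
    (* (b) *)
    (forall p : R, 0 < p < 1 ->
       exists s0 : R,
         ((0 < s0 < 1 /\ eq_s0 p s0) /\
          (forall s : R, 0 < s < 1 -> eq_s0 p s -> s = s0)) /\
         (p > 1 / 2 -> s0 > 2 - / p) /\
         (p0 < p <= 1 / 2 -> s0 > (1 - 2 * p) / (1 - p))).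
Proof.
  destruct (Ranalysis5.IVT_interv (fun s => - F s) (1/10) (2/5)) as [p0 [Hp0 Fp0]].
  { intros a Ha. apply continuity_pt_opp. unfold F.
    apply continuity_pt_minus. apply continuity_pt_comp with (f2:=ln).
    reg. lra. apply cln. apply Rdiv_lt_0_compat; lra. reg. lra. }
  { lra. }
  { pose proof F_01. lra. }
  { pose proof F_04. lra. }
  simpl in Fp0. assert (HF0 : F p0 = 0) by lra. clear Fp0.
  exists p0. split; [split|split].
  - split; [lra|]. unfold eq_p0. unfold F in HF0. lra.
  - intros q Hq Eq. unfold eq_p0 in Eq. assert (F q = 0) by (unfold F; lra).
    destruct (Rtotal_order q p0) as [H1|[H1|H1]]; auto.
    + pose proof (F_dec q p0 ltac:(lra) H1 ltac:(lra)). lra.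
    + pose proof (F_dec p0 q ltac:(lra) H1 ltac:(lra)). lra.
  - intros p Hp. destruct (Req_dec p p0) as [->|Hne].
    + unfold F in HF0. lra.
    + pose proof (F_dec p p0 ltac:(lra) ltac:(lra) ltac:(lra)). unfold F in *. lra.
  - intros p Hp.
    destruct (Ranalysis5.IVT_interv (g p) (1/2) (1 - (1 - p) / 10)) as [s0 [Hs0 Gs0]].
    { intros a Ha. unfold g. reg. lra. }
    { lra. }
    { unfold g. replace (1 / (1/2)) with 2 by field.
      assert (1 + 2 < exp 2) by (apply exp_ineq1; lra). lra. }
    { unfold g. set (b := 1 - (1 - p) / 10).
      assert (1 / b < 3/2).
      { unfold b. apply (Rmult_lt_reg_r (1 - (1 - p) / 10)); [lra|].
        field_simplify; lra. }
      assert (exp (1 / b) < exp (3/2)) by (apply exp_increasing; lra).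
      pose proof exp32.
      replace ((1 - p) * (2 - b) - exp (1 / b) * (1 - b)) with
        ((1 - p) * ((1 + (1 - p) / 10) - exp (1 / b) / 10)) by (unfold b; field).
      apply Rmult_lt_0_compat; lra. }
    assert (Hs : 0 < s0 < 1) by lra.
    assert (HQ : Q p s0 = 1) by (apply g_zero; auto).
    exists s0. split; [split|split].
    + split; auto. apply eqs_g; auto.
    + intros s Hs1 Es. apply eqs_g in Es. apply g_zero in Es; auto.
      destruct (Rtotal_order s s0) as [H1|[H1|H1]]; auto.
      * pose proof (Q_inc p s s0 Hp ltac:(lra) H1 ltac:(lra)). lra.
      * pose proof (Q_inc p s0 s Hp ltac:(lra) H1 ltac:(lra)). lra.
    + intros Hp2. set (t := 2 - / p).
      assert (Hip : 1 < / p < 2).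
      { split.
        - replace 1 with (/ 1) by field. apply Rinv_lt_contravar; lra.
        - replace 2 with (/ (1/2)) by field. apply Rinv_lt_contravar; lra. }
      assert (Ht : 0 < t < 1) by (unfold t; lra).
      assert (g p t < 0).
      { unfold g. assert (1 < exp (1 / t)).
        { assert (0 < 1 / t) by (apply Rdiv_lt_0_compat; lra).
          pose proof (exp_ineq1 (1 / t) ltac:(lra)). lra. }
        replace ((1 - p) * (2 - t) - exp (1 / t) * (1 - t)) with
          ((1 - p) / p * (1 - exp (1 / t))) by (unfold t; field; lra).
        assert (0 < (1 - p) / p) by (apply Rdiv_lt_0_compat; lra).
        nra. }
      apply g_sign in H; auto.
      destruct (Rlt_le_dec t s0) as [H1|H1]; [lra|].
      destruct H1 as [H1|H1].
      * pose proof (Q_inc p s0 t Hp ltac:(lra) H1 ltac:(lra)). lra.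
      * subst. lra.
    + intros Hp2. destruct (Req_dec p (1/2)) as [->|Hne].
      * replace ((1 - 2 * (1/2)) / (1 - 1/2)) with 0 by field. lra.
      * set (t := (1 - 2 * p) / (1 - p)).
        assert (Ht : 0 < t < 1).
        { unfold t. split. apply Rdiv_lt_0_compat; lra.
          replace ((1 - 2 * p) / (1 - p)) with (1 - p / (1 - p)) by (field; lra).
          assert (0 < p / (1 - p)) by (apply Rdiv_lt_0_compat; lra). lra. }
        assert (HFp : F p < 0) by (pose proof (F_dec p0 p ltac:(lra) ltac:(lra) ltac:(lra)); lra).
        unfold F in HFp.
        assert (Hl : (1 - p) / p < exp ((1 - p) / (1 - 2 * p))).
        { assert (0 < (1 - p) / p) by (apply Rdiv_lt_0_compat; lra).
          rewrite <- (exp_ln ((1 - p) / p)) by auto. apply exp_increasing. lra. }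
        assert (g p t < 0).
        { unfold g. replace (1 / t) with ((1 - p) / (1 - 2 * p)) by (unfold t; field; lra).
          replace ((1 - p) * (2 - t)) with 1 by (unfold t; field; lra).
          replace (1 - t) with (p / (1 - p)) by (unfold t; field; lra).
          set (E := exp ((1 - p) / (1 - 2 * p))) in *.
          assert (E * (p / (1 - p)) > 1); [|lra].
          assert (Hq : (1 - p) / p * (p / (1 - p)) = 1) by (field; lra).
          assert ((1 - p) / p * (p / (1 - p)) < E * (p / (1 - p))).
          { apply Rmult_lt_compat_r; [apply Rdiv_lt_0_compat; lra| lra]. }
          lra. }
        apply g_sign in H; auto.
        destruct (Rlt_le_dec t s0) as [H1|H1]; [lra|].
        destruct H1 as [H1|H1].
        -- pose proof (Q_inc p s0 t Hp ltac:(lra) H1 ltac:(lra)). lra.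
        -- subst. lra.
Qed.
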